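(* Let $q$ be a prime and let $A=A_1\oplus\cdots\oplus A_k$ be a finite abelian $q$-group, where $A_i=\mathbb{Z}_{q^{e_i}}^{n_i}$ with $1\le e_1<\cdots<e_k$ and $n_i>0$ for $1\le i\le k$. For each $1\le i\le k$, choose $\epsilon_i\in A_i\setminus qA_i$ (viewed as an element of $A$ via the inclusion of the $i$-th summand). Let $\mathcal I(e_1,\dots,e_k)$ be the set of all finite sequences of integer pairs $(i_1,f_1),\dots,(i_l,f_l)$ satisfying: (i) $l\ge 0$ (the sequence is empty when $l=0$); (ii) $1\le i_1<\cdots<i_l\le k$; (iii) $0\le f_s\le e_{i_s}-1$ for $1\le s\le l$; (iv) $0<f_{s+1}-f_s<e_{i_{s+1}}-e_{i_s}$ for $1\le s\le l-1$. Then as $(i_1,f_1),\dots,(i_l,f_l)$ runs through $\mathcal I(e_1,\dots,e_k)$, the elements $\sum_{s=1}^l q^{f_s}\epsilon_{i_s}$ form a complete list of representatives of the orbits of $A$ under the natural action of $\mathrm{Aut}(A)$, each orbit being represented exactly once.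
   Context: $\mathbb{Z}_m$ denotes the cyclic group of order $m$. The empty sum is $0$. *)

(* Defs.v *)
From HB Require Import structures.
From mathcomp Require Import all_boot all_order all_algebra.
Set Implicit Arguments. Unset Strict Implicit. Unset Printing Implicit Defensive.
Import GRing.Theory.
Local Open Scope ring_scope.

(* The i-th summand A_i = (Z_{q^{e_i}})^{n_i}, as row vectors (indices i : 'I_k,
   i.e. 0-based). *)
Definition summand (q k : nat) (e n : 'I_k -> nat) (i : 'I_k) : Type :=
  'rV['Z_(q ^ e i)]_(n i).

Definition Agrp (q k : nat) (e n : 'I_k -> nat) : Type :=
  {dffun forall i : 'I_k, summand q e n i}.

Definition Aadd (q k : nat) (e n : 'I_k -> nat) (x y : Agrp q e n) : Agrp q e n :=
  @finfun _ (summand q e n) (fun i => x i + y i).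

Definition Azero (q k : nat) (e n : 'I_k -> nat) : Agrp q e n :=
  @finfun _ (summand q e n) (fun i => 0).

Definition Ainj (q k : nat) (e n : 'I_k -> nat) (i : 'I_k) (v : summand q e n i)
  : Agrp q e n :=
  @finfun _ (summand q e n) (dfwith (fun j => (0 : summand q e n j)) v).

(* Automorphisms of A: bijective additive self-maps (additive maps of a finite
   abelian group are exactly the group endomorphisms). *)
Definition is_aut (q k : nat) (e n : 'I_k -> nat) (phi : Agrp q e n -> Agrp q e n) :=
  bijective phi /\ forall x y, phi (Aadd x y) = Aadd (phi x) (phi y).

Definition same_orbit (q k : nat) (e n : 'I_k -> nat) (x y : Agrp q e n) : Prop :=
  exists phi, is_aut phi /\ phi x = y.

Fixpoint chain_ok (k : nat) (e : 'I_k -> nat) (s : seq ('I_k * nat)) : bool :=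
  match s with
  | (i1, f1) :: (((i2, f2) :: _) as t) =>
      [&& (i1 < i2)%N, (f1 < f2)%N, (f2 - f1 < e i2 - e i1)%N & chain_ok e t]
  | _ => true
  end.

Definition in_I (k : nat) (e : 'I_k -> nat) (s : seq ('I_k * nat)) : bool :=
  all (fun p => (p.2 < e p.1)%N) s && chain_ok e s.

Definition rep (q k : nat) (e n : 'I_k -> nat)
  (eps : forall i : 'I_k, summand q e n i) (s : seq ('I_k * nat)) : Agrp q e n :=
  foldr (fun p acc => Aadd (Ainj ((eps p.1) *+ (q ^ p.2)%N)) acc) (Azero q e n) s.

(* Main.v *)
Require Import Defs.
From mathcomp Require Import all_boot all_order all_algebra.
From mathcomp Require Import zify.
Set Implicit Arguments. Unset Strict Implicit. Unset Printing Implicit Defensive.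
Import GRing.Theory.
Local Open Scope ring_scope.
Section Zm.
Variable m : nat.
Hypothesis m_gt1 : (1 < m)%N.

Lemma valZ_add (a b : 'Z_m) : val (a + b) = ((val a + val b) %% m)%N.
Proof.
have -> : a + b = ((val a + val b)%:R : 'Z_m) by rewrite natrD !natr_Zp.
exact: val_Zp_nat.
Qed.

Lemma Zm_mulrn_m (z : 'Z_m) : z *+ m = 0.
Proof. by rewrite -mulr_natr pchar_Zp // mulr0. Qed.

Lemma Zm_mulrn_mod (z : 'Z_m) N : z *+ N = z *+ (N %% m).
Proof. by rewrite {1}(divn_eq N m) mulrnDr mulrnA Zm_mulrn_m add0r. Qed.

Lemma rowZ_mulrn_mod n (v : 'rV['Z_m]_n) N : v *+ N = v *+ (N %% m).
Proof. by apply/rowP => j; rewrite !mulmxnE Zm_mulrn_mod. Qed.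

Lemma rowZ_mulrn_m n (v : 'rV['Z_m]_n) : v *+ m = 0.
Proof. by rewrite rowZ_mulrn_mod modnn mulr0n. Qed.

Lemma Zm_valnat (z : 'Z_m) : (val z)%:R = z.
Proof. exact: natr_Zp. Qed.

Lemma val_lt (z : 'Z_m) : (val z < m)%N.
Proof. by case: z => x hx /=; rewrite -(Zp_cast m_gt1). Qed.
End Zm.
Definition orbV (R : nzRingType) n (u w : 'rV[R]_n) :=
  exists psi : 'rV[R]_n -> 'rV[R]_n,
    bijective psi /\ (forall a b, psi (a + b) = psi a + psi b) /\ psi u = w.

Lemma orbV_refl (R : nzRingType) n (u : 'rV[R]_n) : orbV u u.
Proof. by exists id; split=> //; exists id. Qed.

Lemma orbV_sym (R : nzRingType) n (u w : 'rV[R]_n) : orbV u w -> orbV w u.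
Proof.
case=> psi [[g gK Kg] [ad <-]]; exists g; split; first by exists psi.
split=> // a b; by rewrite -{1}(Kg a) -{1}(Kg b) -ad gK.
Qed.

Lemma orbV_trans (R : nzRingType) n (u v w : 'rV[R]_n) :
  orbV u v -> orbV v w -> orbV u w.
Proof.
case=> f [fb [fa fu]] [g [gb [ga gv]]]; exists (g \o f); split.
  exact: bij_comp.
by split=> [a b|] /=; rewrite ?fa ?ga // fu gv.
Qed.

Lemma orbV_trans_unit (R : comUnitRingType) n (u w : 'rV[R]_n) j :
  u 0 j \is a GRing.unit -> w 0 j \is a GRing.unit -> orbV u w.
Proof.
move=> uu wu.
pose lam (v : 'rV[R]_n) := v 0 j * (u 0 j)^-1.
pose d := w - u.
have lamD : forall a b, lam (a + b) = lam a + lam b.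
  by move=> a b; rewrite /lam mxE mulrDl.
have lamZ : forall c a, lam (c *: a) = c * lam a.
  by move=> c a; rewrite /lam mxE mulrA.
have lamu : lam u = 1 by rewrite /lam mulrV.
have lamw : lam w \is a GRing.unit by rewrite /lam unitrMl // unitrV.
have lamd : lam d = lam w - 1.
  by rewrite /lam /d !mxE mulrBl -/(lam u) lamu.
pose T v := v + lam v *: d.
pose T' v := v - (lam v / lam w) *: d.
exists T; split; last split.
- exists T' => v.
    rewrite /T' /T lamD lamZ lamd.
    have -> : lam v + lam v * (lam w - 1) = lam v * lam w.
      by rewrite mulrBr mulr1 addrCA subrr addr0.
    by rewrite mulrK // addrK.
  rewrite /T /T' lamD -scaleNr lamZ lamd.
  have -> : lam v + - (lam v / lam w) * (lam w - 1) = lam v / lam w.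
    by rewrite mulNr mulrBr divrK // mulr1 opprB addrCA subrr addr0.
  by rewrite scaleNr subrK.
- by move=> a b; rewrite /T lamD scalerDl addrACA.
- by rewrite /T lamu scale1r /d addrC subrK.
Qed.
Section Zq.
Variables (q e : nat).
Hypothesis q_pr : prime q.
Hypothesis e_gt0 : (0 < e)%N.
Local Notation m := (q ^ e)%N.
Lemma m_gt1 : (1 < m)%N.
Proof. by rewrite -(expn0 q) ltn_exp2l ?prime_gt1. Qed.

Lemma unitZqE (z : 'Z_m) : (z \is a GRing.unit) = ~~ (q %| val z)%N.
Proof.
by rewrite -{1}(natr_Zp z) unitZpE ?m_gt1 // coprime_pexpl // prime_coprime.
Qed.

Lemma unitZq_add (z w : 'Z_m) : z \is a GRing.unit -> w \isn't a GRing.unit ->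
  z + w \is a GRing.unit.
Proof.
rewrite !unitZqE negbK valZ_add ?m_gt1 // => nz dw.
apply: contra nz => H.
have: (q %| val z + val w)%N.
  by rewrite (divn_eq (val z + val w) m) dvdn_add // dvdn_mull // dvdn_exp.
by rewrite dvdn_addl.
Qed.

Lemma prim_unit n (v : 'rV['Z_m]_n) : ~ (exists y, v = y *+ q) ->
  exists j, v 0 j \is a GRing.unit.
Proof.
move=> np; case E: [exists j, v 0 j \is a GRing.unit]; first by move/existsP: E.
have nu : forall j, ~ (v 0 j \is a GRing.unit).
  by move=> j H; move/negbT/existsP: E; apply; exists j.
exfalso; apply: np.
exists (\row_j ((val (v 0 j) %/ q)%:R : 'Z_m)); apply/rowP => j.
rewrite mulmxnE mxE -mulrnA divnK; first by rewrite natr_Zp.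
have: ~~ (v 0 j \is a GRing.unit) by apply/negP; apply: nu.
by rewrite unitZqE negbK.
Qed.

Lemma Zq_mulrn_dvd n (v : 'rV['Z_m]_n) N : (m %| N)%N -> v *+ N = 0.
Proof.
move=> /dvdnP [t ->]; by rewrite rowZ_mulrn_mod ?m_gt1 // modnMl mulr0n.
Qed.

Lemma Zq_kill n (v : 'rV['Z_m]_n) g : (g <= e)%N -> v *+ (q ^ g) = 0 ->
  exists w, v = w *+ (q ^ (e - g)).
Proof.
move=> ge H.
exists (\row_j ((val (v 0 j) %/ q ^ (e - g))%:R : 'Z_m)); apply/rowP => j.
rewrite mulmxnE mxE -mulrnA divnK; first by rewrite natr_Zp.
have := congr1 (fun M : 'rV['Z_m]_n => nat_of_ord (M 0 j)) H.
rewrite mulmxnE mxE -{1}(natr_Zp (v 0 j)) -mulrnA val_Zp_nat ?m_gt1 //.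
move=> H1; have : (m %| val (v ord0 j) * q ^ g)%N by rewrite /dvdn H1.
rewrite -{1}(subnK ge) expnD dvdn_pmul2r // expn_gt0 prime_gt0 //.
Qed.

Lemma orbV_prim n (u w : 'rV['Z_m]_n) :
  ~ (exists y, u = y *+ q) -> ~ (exists y, w = y *+ q) -> orbV u w.
Proof.
move=> /prim_unit [j uj] /prim_unit [j' wj'].
case wj: (w 0 j \is a GRing.unit); first exact: orbV_trans_unit uj wj.
case uj': (u 0 j' \is a GRing.unit); first exact: orbV_trans_unit uj' wj'.
apply: (@orbV_trans _ _ _ (u + w)).
  apply: (orbV_trans_unit (j := j)) => //.
  by rewrite mxE unitZq_add // wj.
apply: orbV_sym; apply: (orbV_trans_unit (j := j')) => //.
by rewrite mxE addrC unitZq_add // uj'.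
Qed.

Lemma decomp n (x : 'rV['Z_m]_n) : x != 0 ->
  exists h y, [/\ (h < e)%N, ~ (exists z, y = z *+ q) & x = y *+ (q ^ h)].
Proof.
move=> nx.
pose P h := [exists y, x == y *+ (q ^ h)].
have P0 : exists h, P h by exists 0%N; apply/existsP; exists x; rewrite expn0.
have Pub : forall h, P h -> (h <= e.-1)%N.
  move=> h /existsP [y /eqP xy]; rewrite -ltnS prednK //.
  rewrite ltnNge; apply/negP => eh; move: nx; rewrite xy Zq_mulrn_dvd ?eqxx //.
  by rewrite dvdn_exp2l.
case: (ex_maxnP P0 Pub) => h /existsP [y /eqP xy] hmax.
exists h, y; split=> //.
- by have := Pub _ (introT existsP (ex_intro _ y (introT eqP xy)));
     rewrite -ltnS prednK.
- case=> z yz; suff : (h.+1 <= h)%N by rewrite ltnn.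
  apply: hmax.
  by apply/existsP; exists z; rewrite xy yz -mulrnA expnS mulnC.
Qed.
End Zq.

Lemma add_mulrn (V W : zmodType) (f : V -> W) :
  (forall a b, f (a + b) = f a + f b) -> forall v N, f (v *+ N) = f v *+ N.
Proof.
move=> ad v N.
have f0 : f 0 = 0 by apply: (@addrI _ (f 0)); rewrite -ad !addr0.
by elim: N => [|N IH]; rewrite ?mulr0n // !mulrS ad IH.
Qed.
Section AG.
Variables (q k : nat) (e n : 'I_k -> nat).
Local Notation A := (Agrp q e n).
Local Notation S := (summand q e n).

Lemma AaddE (x y : A) i : Aadd x y i = x i + y i.
Proof. by rewrite /Aadd ffunE. Qed.
Lemma AzeroE i : Azero q e n i = 0.
Proof. by rewrite /Azero ffunE. Qed.
Lemma AinjE_in i (v : S i) : Ainj v i = v.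
Proof. by rewrite /Ainj ffunE dfwith_in. Qed.
Lemma AinjE_out i (v : S i) j : i != j -> Ainj v j = 0.
Proof. by move=> ne; rewrite /Ainj ffunE dfwith_out. Qed.

Lemma repE (eps : forall i, S i) s c :
  rep eps s c = \sum_(p <- s | p.1 == c) eps c *+ (q ^ p.2).
Proof.
elim: s => [|[i f] s IH] /=; first by rewrite AzeroE big_nil.
rewrite AaddE IH big_cons /=.
case: (eqVneq i c) => [<-|ne]; first by rewrite AinjE_in.
by rewrite AinjE_out // add0r.
Qed.

Lemma same_orbit_refl (x : A) : same_orbit x x.
Proof. by exists id; split=> //; split=> //; exists id. Qed.

Lemma same_orbit_sym (x y : A) : same_orbit x y -> same_orbit y x.
Proof.
case=> psi [[[g gK Kg] ad] <-]; exists g; split=> //; split; first by exists psi.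
move=> a b; by rewrite -{1}(Kg a) -{1}(Kg b) -ad gK.
Qed.

Lemma same_orbit_trans (x y z : A) :
  same_orbit x y -> same_orbit y z -> same_orbit x z.
Proof.
case=> f [[fb fa] fu] [g [[gb ga] gv]]; exists (g \o f); split.
  by split; [exact: bij_comp | move=> a b /=; rewrite fa ga].
by rewrite /= fu gv.
Qed.

Definition addS i j (f : S i -> S j) := forall a b, f (a + b) = f a + f b.

Lemma aut_family (x y : A) :
  (forall i, exists psi : S i -> S i, [/\ bijective psi, addS psi & psi (x i) = y i]) ->
  same_orbit x y.
Proof.
move=> H.
have [psi Hpsi] := fin_all_exists H.
have H2 : forall i, exists g : S i -> S i, cancel (psi i) g /\ cancel g (psi i).
  by move=> i; case: (Hpsi i) => [[g ? ?] _ _]; exists g.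
have [g Hg] := fin_all_exists H2.
exists (fun z : A => @finfun _ S (fun i => psi i (z i))); split; last first.
  by apply/ffunP => i; rewrite ffunE; case: (Hpsi i).
split.
  exists (fun z : A => @finfun _ S (fun i => g i (z i))) => z; apply/ffunP => i;
  rewrite !ffunE; by case: (Hg i).
move=> a b; apply/ffunP => i; rewrite !AaddE !ffunE ?AaddE.
by case: (Hpsi i) => _ ->.
Qed.

Lemma aut_transv a b (pi : S a -> S b) (x : A) : a != b -> addS pi ->
  same_orbit x (Aadd x (Ainj (pi (x a)))).
Proof.
move=> ab ad.
pose T (z : A) := Aadd z (Ainj (pi (z a))).
pose T' (z : A) := Aadd z (Ainj (- pi (z a))).
have Ta : forall z, T z a = z a by move=> z; rewrite /T AaddE AinjE_out 1?eq_sym // addr0.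
have T'a : forall z, T' z a = z a by move=> z; rewrite /T' AaddE AinjE_out 1?eq_sym // addr0.
exists T; split=> //; split.
  exists T' => z; apply/ffunP => c.
    rewrite /T' Ta /T !AaddE; case: (eqVneq b c) => [<-|ne].
      by rewrite !AinjE_in addrK.
    by rewrite !AinjE_out // !addr0.
  rewrite /T T'a /T' !AaddE; case: (eqVneq b c) => [<-|ne].
    by rewrite !AinjE_in subrK.
  by rewrite !AinjE_out // !addr0.
move=> z w; apply/ffunP => c; rewrite /T !AaddE.
case: (eqVneq b c) => [<-|ne]; last by rewrite !AinjE_out // !addr0.
rewrite !AinjE_in ad; by rewrite addrACA.
Qed.
End AG.
Section Comb.
Local Open Scope nat_scope.
Variables (k : nat) (e : 'I_k -> nat).
Hypothesis e_mono : forall i j : 'I_k, (i < j)%N -> (e i < e j)%N.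

Definition Rk (p r : 'I_k * nat) := (val p.1 < val r.1)%N.

Lemma chain_all i f s : chain_ok e ((i, f) :: s) ->
  all (fun p : 'I_k * nat => [&& (i < p.1)%N, (f < p.2)%N & (p.2 - f < e p.1 - e i)%N]) s.
Proof.
elim: s i f => [|[i2 f2] s IH] i f //=.
case/and4P => H1 H2 H3 Hc; rewrite H1 H2 H3 /=.
have := IH _ _ Hc; apply: sub_all => -[i3 f3] /= /and3P [G1 G2 G3].
apply/and3P; split; lia.
Qed.

Lemma chain_tail p s : chain_ok e (p :: s) -> chain_ok e s.
Proof. by case: p s => i f [|[i2 f2] s] //= /and4P []. Qed.

Lemma chain_sorted s : chain_ok e s -> sorted Rk s.
Proof.
elim: s => [|[i f] s IH] // Hc.
have Hs := IH (chain_tail Hc).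
case: s Hc Hs {IH} => [|[i2 f2] s] // Hc Hs.
move: Hc => /= /and4P [H1 _ _ _]; by rewrite /Rk /= H1.
Qed.

Lemma bad_pair s : sorted Rk s -> ~~ chain_ok e s ->
  exists s1 a fa b fb s2, s = s1 ++ (a, fa) :: (b, fb) :: s2 /\
     ~~ ((fa < fb)%N && (fb - fa < e b - e a)%N).
Proof.
elim: s => [|[i f] s IH] //.
case: s IH => [|[i2 f2] s] IH //= /andP [R12 Hp].
case H: ((f < f2)%N && (f2 - f < e i2 - e i)%N).
  move/andP: H => [H1 H2]; rewrite /Rk /= in R12; rewrite R12 H1 H2 /= => Hc.
  have [s1 [a [fa [b [fb [s2 [E N]]]]]]] := IH Hp Hc.
  by exists ((i, f) :: s1), a, fa, b, fb, s2; rewrite E.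
by move=> _; exists [::], i, f, i2, f2, s; rewrite H.
Qed.

Definition Qf (s : seq ('I_k * nat)) j h :=
  all (fun p : 'I_k * nat => (p.2 + j < e p.1)%N ==> (h <= p.2 + j)%N) s.

Lemma Qf_cons0 i f s : in_I e ((i, f) :: s) -> forall h, Qf ((i, f) :: s) 0 h = (h <= f)%N.
Proof.
case/andP => /= /andP [fe Ha] Hc h.
have Hall := chain_all Hc.
rewrite /Qf /= addn0 fe /=; case: leqP => hf //=.
apply/allP => -[i2 f2] Hin /=; apply/implyP => _.
by have := allP Hall _ Hin; rewrite /= => /and3P [_ ? _]; lia.
Qed.

Lemma Qf_cons_d i f s : in_I e ((i, f) :: s) ->
  forall j, Qf ((i, f) :: s) j (j + f + 1) = (e i - f <= j)%N.
Proof.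
case/andP => /= /andP [fe Ha] Hc j.
have Hall := chain_all Hc.
rewrite /Qf /=; case: (leqP (e i - f) j) => H.
  have -> : (f + j < e i)%N = false by lia.
  apply/allP => -[i2 f2] Hin /=; apply/implyP => _.
  by have := allP Hall _ Hin; rewrite /= => /and3P [_ ? _]; lia.
have -> : (f + j < e i)%N by lia.
by have -> : (j + f + 1 <= f + j)%N = false by lia.
Qed.

Lemma Qf_cons_late i f s j : (e i - f <= j)%N -> (f < e i)%N ->
  forall h, Qf ((i, f) :: s) j h = Qf s j h.
Proof. by move=> H fe h; rewrite /Qf /=; have -> : (f + j < e i)%N = false by lia. Qed.

Lemma Qf_cons_early i f s j : in_I e ((i, f) :: s) -> (j < e i - f)%N ->
  forall h, Qf s j h = Qf ((i, f) :: s) (e i - f) (h + (e i - f - j)).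
Proof.
case/andP => /= /andP [fe Ha] Hc jd h.
have Hall := chain_all Hc.
rewrite /Qf /=; have -> : (f + (e i - f) < e i)%N = false by lia.
rewrite /=; apply: eq_in_all => -[i2 f2] Hin /=.
have := allP Hall _ Hin; rewrite /= => /and3P [_ ? ?].
have -> : (f2 + j < e i2)%N by lia.
have -> : (f2 + (e i - f) < e i2)%N by lia.
by apply/idP/idP => /=; lia.
Qed.

Lemma in_I_tail p s : in_I e (p :: s) -> in_I e s.
Proof. case/andP => /= /andP [_ Ha] Hc; apply/andP; split=> //; exact: chain_tail Hc. Qed.

Lemma Qf_inj s t : in_I e s -> in_I e t ->
  (forall j h, Qf s j h = Qf t j h) -> s = t.
Proof.
elim: s t => [|[i f] s IH] [|[i' f'] t] //.
- move=> _ Ht /(_ 0%N f'.+1); rewrite (Qf_cons0 Ht) ltnn; by [].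
- move=> Hs _ /(_ 0%N f.+1); rewrite (Qf_cons0 Hs) ltnn; by [].
move=> Hs Ht EQ.
have ff : f = f'.
  have := EQ 0%N f; have := EQ 0%N f'.
  rewrite !(Qf_cons0 Hs) !(Qf_cons0 Ht) !leqnn; lia.
subst f'.
have fe : (f < e i)%N by case/andP: Hs => /= /andP [].
have fe' : (f < e i')%N by case/andP: Ht => /= /andP [].
have ee : e i = e i'.
  have := EQ (e i - f) (e i - f + f + 1); have := EQ (e i' - f) (e i' - f + f + 1).
  rewrite !(Qf_cons_d Hs) !(Qf_cons_d Ht) !leqnn; lia.
have ii : i = i'.
  apply/val_inj; case: (ltngtP i i') => // H.
    by have := e_mono H; rewrite ee ltnn.
  by have := e_mono H; rewrite ee ltnn.
subst i'; congr cons; apply: IH; [exact: in_I_tail Hs | exact: in_I_tail Ht |].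
move=> j h; case: (ltnP j (e i - f)) => H.
  by rewrite (Qf_cons_early Hs H) (Qf_cons_early Ht H) EQ.
by rewrite -(Qf_cons_late s H fe) -(Qf_cons_late t H fe) EQ.
Qed.
End Comb.

Section AH.
Variables (q k : nat) (e n : 'I_k -> nat).
Variable eps : forall i : 'I_k, summand q e n i.
Hypothesis q_pr : prime q.
Hypothesis e_pos : forall i, (0 < e i)%N.
Hypothesis e_mono : forall i j : 'I_k, (i < j)%N -> (e i < e j)%N.
Hypothesis eps_prim : forall i : 'I_k, ~ exists y : summand q e n i, eps i = (y *+ q)%R.
Local Notation A := (Agrp q e n).
Local Notation S := (summand q e n).

Lemma sum_none (c : 'I_k) (F : nat -> S c) (s : seq ('I_k * nat)) :
  c \notin map fst s -> \sum_(p <- s | p.1 == c) F p.2 = 0.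
Proof.
move=> nc; apply: big1_seq => p /andP [/eqP pc ps].
by rewrite -pc (map_f fst ps) in nc.
Qed.

Lemma sum_uniq (c : 'I_k) (F : nat -> S c) (s : seq ('I_k * nat)) f :
  uniq (map fst s) -> (c, f) \in s -> \sum_(p <- s | p.1 == c) F p.2 = F f.
Proof.
elim: s => [|[i g] s IH] //= /andP [ni us]; rewrite in_cons big_cons /=.
case: (eqVneq i c) => [ic|ic].
  subst i; case/orP => [/eqP [->]|H]; first by rewrite sum_none // addr0.
  by move: ni; rewrite (map_f fst H).
case/orP => [/eqP [ic']|H]; first by rewrite ic' eqxx in ic.
exact: IH.
Qed.

Lemma sorted_fst (s : seq ('I_k * nat)) : sorted (@Rk k) s -> uniq (map fst s).
Proof.
move=> Hs; apply: (@map_uniq _ _ val).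
rewrite -map_comp; apply: (sorted_uniq ltn_trans ltnn).
by rewrite sorted_map.
Qed.

Lemma Rk_trans : transitive (@Rk k).
Proof. by move=> y x z; rewrite /Rk; apply: ltn_trans. Qed.

Lemma pi_exists (c d : 'I_k) C fc fd :
  (q ^ e d %| C * q ^ e c)%N -> (fc < e c)%N -> (C * q ^ fc = q ^ fd)%N ->
  exists pi : S c -> S d, addS pi /\ pi (eps c *+ q ^ fc) = - (eps d *+ q ^ fd).
Proof.
move=> Hd fce HC.
have [j uj] := prim_unit q_pr (e_pos c) (@eps_prim c).
pose lam (v : S c) := v 0 j * (eps c 0 j)^-1.
have lamD : forall a b, lam (a + b) = lam a + lam b.
  by move=> a b; rewrite /lam mxE mulrDl.
have mgt := m_gt1 q_pr (e_pos c).
exists (fun v => - (eps d *+ (C * val (lam v)))); split.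
  move=> a b; rewrite lamD valZ_add // -opprD -mulrnDr -mulnDr; congr (- _).
  rewrite {2}(divn_eq (val (lam a) + val (lam b)) (q ^ e c)) mulnDr mulrnDr.
  have -> : eps d *+ (C * ((val (lam a) + val (lam b)) %/ q ^ e c * q ^ e c)) = 0.
    apply: (Zq_mulrn_dvd q_pr (e_pos d)).
    by rewrite mulnCA dvdn_mull.
  by rewrite add0r.
congr (- _).
have -> : lam (eps c *+ q ^ fc) = (q ^ fc)%:R.
  rewrite (add_mulrn lamD) /lam mulrV //.
have -> : val ((q ^ fc)%:R : 'Z_(q ^ e c)) = (q ^ fc)%N.
  have lt : (q ^ fc < q ^ e c)%N by rewrite ltn_exp2l // prime_gt1.
  exact: (etrans (val_Zp_nat mgt (q ^ fc)) (modn_small lt)).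
by rewrite HC.
Qed.

Lemma kill_lemma (s : seq ('I_k * nat)) (c d : 'I_k) fc fd (pi : S c -> S d) :
  sorted (@Rk k) s -> (c, fc) \in s -> (d, fd) \in s -> c != d -> addS pi ->
  pi (eps c *+ q ^ fc) = - (eps d *+ q ^ fd) ->
  same_orbit (rep eps s) (rep eps (filter (fun p => p.1 != d) s)).
Proof.
move=> Hs cin din cd ad piv.
have us := sorted_fst Hs.
have -> : rep eps (filter (fun p => p.1 != d) s) =
          Aadd (rep eps s) (Ainj (pi (rep eps s c))).
  apply/ffunP => z; rewrite AaddE !repE big_filter_cond.
  case: (eqVneq d z) => [<-|dz].
    rewrite AinjE_in (sum_uniq (fun f => eps c *+ q ^ f) us cin) piv.
    rewrite (sum_uniq (fun f => eps d *+ q ^ f) us din) addrN.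
    by apply: big1 => p /andP [/negbTE ->].
  rewrite AinjE_out // addr0; apply: eq_bigl => p.
  by case: (eqVneq p.1 z) => [->|]; rewrite ?andbF // andbT eq_sym.
exact: aut_transv.
Qed.

Lemma reduce N (s : seq ('I_k * nat)) : (size s <= N)%N -> sorted (@Rk k) s ->
  all (fun p : 'I_k * nat => (p.2 < e p.1)%N) s ->
  exists t, in_I e t /\ same_orbit (rep eps s) (rep eps t).
Proof.
elim: N s => [|N IH] s.
  by rewrite leqn0 => /eqP /size0nil -> _ _; exists [::]; split; last exact: same_orbit_refl.
move=> Hsz Hs Ha.
case Hc: (chain_ok e s).
  by exists s; split; [rewrite /in_I Ha Hc | exact: same_orbit_refl].
have [s1 [a [fa [b [fb [s2 [E Nab]]]]]]] := bad_pair Hs (negbT Hc).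
have ain : (a, fa) \in s by rewrite E mem_cat in_cons eqxx orbT.
have bin : (b, fb) \in s by rewrite E mem_cat !in_cons eqxx !orbT.
have Rab : (a < b)%N.
  move: Hs; rewrite E => /cat_sorted2 [_] /=.
  by case/andP; rewrite /Rk.
have eab := e_mono Rab.
have fae : (fa < e a)%N by have := allP Ha _ ain.
have fbe : (fb < e b)%N by have := allP Ha _ bin.
have ab : a != b by rewrite neq_ltn Rab.
suff [d [fd [din Ho]]] : exists d fd, (d, fd) \in s /\
   same_orbit (rep eps s) (rep eps (filter (fun p => p.1 != d) s)).
  have := IH (filter (fun p => p.1 != d) s).
  case.
  - rewrite size_filter -ltnS; apply: leq_trans Hsz.
    rewrite -[X in (_ < X)%N](count_predC (fun p : 'I_k * nat => p.1 != d)).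
    rewrite -addn1 leq_add2l lt0n -lt0n -has_count.
    by apply/hasP; exists (d, fd) => //=; rewrite negbK.
  - by apply: sorted_filter => //; exact: Rk_trans.
  - apply/allP => p; rewrite mem_filter => /andP [_ H]; exact: allP Ha p H.
  move=> t [It Ot]; exists t; split=> //; exact: same_orbit_trans Ho Ot.
case: (leqP fb fa) => H.
  have [pi [ad piv]] := @pi_exists b a (q ^ (fa - fb)) fb fa
    ltac:(by rewrite -expnD dvdn_exp2l //; lia) fbe
    ltac:(by rewrite -expnD subnK).
  exists a, fa; split=> //.
  by apply: (kill_lemma Hs bin ain _ ad piv); rewrite eq_sym.
have H2 : (e b - e a <= fb - fa)%N by move: Nab; rewrite H /=; lia.
have [pi [ad piv]] := @pi_exists a b (q ^ (fb - fa)) fa fb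
  ltac:(by rewrite -expnD dvdn_exp2l //; lia) fae
  ltac:(by rewrite -expnD subnK // ltnW).
exists b, fb; split=> //.
exact: (kill_lemma Hs ain bin ab ad piv).
Qed.

Definition Amul (x : A) N : A := @finfun _ S (fun i => x i *+ N).
Definition Pinv (x : A) j h := exists y : A, Amul x (q ^ j) = Amul y (q ^ h).

Lemma aut_Amul (phi : A -> A) :
  (forall a b, phi (Aadd a b) = Aadd (phi a) (phi b)) ->
  forall x N, phi (Amul x N) = Amul (phi x) N.
Proof.
move=> ad x N.
have p0 : phi (Azero q e n) = Azero q e n.
  have : phi (Azero q e n) = Aadd (phi (Azero q e n)) (phi (Azero q e n)).
    rewrite -ad; congr phi; apply/ffunP => i; by rewrite AaddE AzeroE addr0.
  move=> H; apply/ffunP => i; have := congr1 (fun z : A => z i) H.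
  rewrite AaddE AzeroE => H2; apply: (@addrI _ (phi (Azero q e n) i)).
  by rewrite addr0 -H2.
elim: N => [|N IH].
  have E : forall z : A, Amul z 0 = Azero q e n.
    by move=> z; apply/ffunP => i; rewrite !ffunE mulr0n.
  by rewrite !E.
have E : forall z : A, Amul z N.+1 = Aadd z (Amul z N).
  by move=> z; apply/ffunP => i; rewrite AaddE !ffunE mulrS.
by rewrite !E ad IH.
Qed.

Lemma Pinv_orbit (x y : A) j h : same_orbit x y -> Pinv x j h -> Pinv y j h.
Proof.
case=> phi [[_ ad] <-] [z Ez]; exists (phi z).
by rewrite -!(aut_Amul ad) Ez.
Qed.

Lemma mulrn_qpred i (v : S i) a : (0 < a)%N -> v *+ q ^ a = (v *+ q ^ a.-1) *+ q.
Proof. by move=> a0; rewrite -mulrnA -expnSr prednK. Qed.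

Lemma Pinv_rep t j h : in_I e t -> Pinv (rep eps t) j h <-> Qf e t j h.
Proof.
move=> It; have us : uniq (map fst t).
  by case/andP: It => _ /chain_sorted /sorted_fst.
split.
  case=> y E; apply/allP => -[i f] Hin /=; apply/implyP => alive.
  rewrite leqNgt; apply/negP => hbig.
  have := congr1 (fun z : A => z i) E; rewrite !ffunE repE.
  rewrite (sum_uniq (fun f => eps i *+ q ^ f) us Hin) -mulrnA -expnD.
  set g := (f + j)%N.
  have -> : (q ^ h = q ^ (h - g) * q ^ g)%N by rewrite -expnD subnK // ltnW.
  rewrite mulrnA => E2.
  have : (eps i - y i *+ q ^ (h - g)) *+ q ^ g = 0 by rewrite mulrnBl E2 subrr.
  case/(Zq_kill q_pr (e_pos i) (ltnW alive)) => w Ew.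
  apply: (@eps_prim i); exists (y i *+ q ^ (h - g).-1 + w *+ q ^ (e i - g).-1).
  rewrite mulrnDl -!mulrn_qpred ?subn_gt0 // -Ew.
  by rewrite addrC subrK.
move=> Q.
exists (@finfun _ S (fun i => \sum_(p <- t | p.1 == i) eps i *+ q ^ (p.2 + j - h))).
apply/ffunP => i; rewrite !ffunE repE -!sumrMnl big_seq_cond [RHS]big_seq_cond; apply: eq_bigr.
move=> [i2 f] /andP [Hin /eqP /= ii]; subst i2.
rewrite -!mulrnA -!expnD.
have := allP Q _ Hin; rewrite /= => /implyP Hq.
case: (ltnP (f + j) (e i)) => al.
  by rewrite subnK // Hq.
rewrite !(Zq_mulrn_dvd q_pr (e_pos i)) // dvdn_exp2l //; lia.
Qed.

Lemma uniqueness s t : in_I e s -> in_I e t ->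
  same_orbit (rep eps s) (rep eps t) -> s = t.
Proof.
move=> Is It O; apply: (Qf_inj e_mono Is It) => j h.
apply/idP/idP => H.
  by apply/(Pinv_rep _ _ It); apply: Pinv_orbit O _; apply/(Pinv_rep _ _ Is).
apply/(Pinv_rep _ _ Is); apply: Pinv_orbit (same_orbit_sym O) _.
exact/(Pinv_rep _ _ It).
Qed.
End AH.

Theorem theorem2p1 (q k : nat) (e n : 'I_k -> nat)
  (eps : forall i : 'I_k, summand q e n i) :
  prime q ->
  (forall i : 'I_k, (1 <= e i)%N) ->
  (forall i j : 'I_k, (i < j)%N -> (e i < e j)%N) ->
  (forall i : 'I_k, (0 < n i)%N) ->
  (forall i : 'I_k, ~ exists y : summand q e n i, eps i = (y *+ q)%R) ->
  (forall x : Agrp q e n,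
      exists s : seq ('I_k * nat), in_I e s /\ same_orbit (rep eps s) x) /\
  (forall s t : seq ('I_k * nat), in_I e s -> in_I e t ->
      same_orbit (rep eps s) (rep eps t) -> s = t).
Proof.
move=> q_pr e_pos e_mono n_pos eps_prim.
split; last first.
  move=> s t Is It O.
  exact: (@uniqueness q k e n eps q_pr e_pos e_mono eps_prim s t Is It O).
move=> x.
have H1 : forall i, exists h : nat, x i = 0 \/ ((h < e i)%N /\
    exists y, ~ (exists z, y = z *+ q) /\ x i = y *+ q ^ h).
  move=> i; case: (eqVneq (x i) 0) => [->|nz]; first by exists 0%N; left.
  have [h [y [he yp xy]]] := decomp q_pr (e_pos i) nz.
  by exists h; right; split=> //; exists y.
have [h Hh] := fin_all_exists H1.
pose s0 := [seq (i, h i) | i <- enum 'I_k & x i != 0].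
have Srt : sorted (@Rk k) s0.
  rewrite sorted_map; apply: sorted_filter.
    by move=> a b c; apply: ltn_trans.
  by have := iota_ltn_sorted 0 k; rewrite -val_enum_ord sorted_map.
have Al : all (fun p : 'I_k * nat => (p.2 < e p.1)%N) s0.
  apply/allP => p /mapP [i]; rewrite mem_filter => /andP [nz _] -> /=.
  by case: (Hh i) => [E|[]//]; rewrite E eqxx in nz.
have us := sorted_fst Srt.
have O1 : same_orbit x (rep eps s0).
  apply: aut_family => i; rewrite repE.
  case: (eqVneq (x i) 0) => [xi|nz].
    rewrite (sum_none (fun f => eps i *+ q ^ f)); last first.
      rewrite -map_comp (eq_map (g := id)) // map_id mem_filter xi eqxx //.
    rewrite xi; exists id; split=> //; exists id => //.
  have iin : (i, h i) \in s0.
    by apply: (map_f (fun i => (i, h i))); rewrite mem_filter nz mem_enum.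
  rewrite (sum_uniq (fun f => eps i *+ q ^ f) us iin).
  case: (Hh i) => [xi|[he [y [yp ->]]]]; first by rewrite xi eqxx in nz.
  have [psi [pb [pa py]]] := orbV_prim q_pr (e_pos i) yp (@eps_prim i).
  exists psi; split=> //.
  by rewrite (add_mulrn pa) py.
have [t [It O2]] := reduce q_pr e_pos e_mono eps_prim (leqnn (size s0)) Srt Al.
exists t; split=> //; apply: same_orbit_sym; exact: same_orbit_trans O1 O2.
Qed.
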